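(* For all $n\ge0$ and $j=0,1,2$, \[ c_{3n+j}^2=\delta_{j,0}+(1-\delta_{j,0})c_{j-1}^2+\sum_{k=1}^n\left\{c_{3k+j-1}^2+2\sum_{i=0}^{3(k-1)+j}p_{3k+j-1-i}c_i^2\right\}. \]
   Context: The Narayana's cows numbers $c_n$ are defined by $c_n=\delta_{n,0}+c_{n-1}+c_{n-3}$ for $n\ge0$, $c_n=0$ for $n<0$. The Padovan numbers $p_n$ are defined by $p_n=\delta_{n,0}+p_{n-2}+p_{n-3}$ for $n\ge0$, $p_n=0$ for $n<0$. $\delta_{i,j}$ is $1$ if $i=j$ and $0$ otherwise. Empty sums are $0$. *)

(* Defs.v *)
From mathcomp Require Import all_boot.
Set Implicit Arguments. Unset Strict Implicit. Unset Printing Implicit Defensive.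

(* Narayana's cows numbers: c_n = [n=0] + c_{n-1} + c_{n-3}, c_n = 0 for n<0.
   Unfolded for n >= 0: c_0 = c_1 = c_2 = 1, c_{n+3} = c_{n+2} + c_n. *)
Fixpoint cow (n : nat) : nat :=
  match n with
  | 0 | 1 | 2 => 1
  | S (S (S m as m1) as m2) => cow m2 + cow m
  end.

(* Padovan numbers: p_n = [n=0] + p_{n-2} + p_{n-3}, p_n = 0 for n<0.
   Unfolded: p_0 = 1, p_1 = 0, p_2 = 1, p_{n+3} = p_{n+1} + p_n. *)
Fixpoint padovan (n : nat) : nat :=
  match n with
  | 0 => 1
  | 1 => 0
  | 2 => 1
  | S (S (S m as m1)) => padovan m1 + padovan m
  end.

Definition delta (i j : nat) : nat := if i == j then 1 else 0.

Lemma cow_vals : [seq cow n | n <- iota 0 10] = [:: 1;1;1;2;3;4;6;9;13;19].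
Proof. by []. Qed.
Lemma padovan_vals : [seq padovan n | n <- iota 0 10] = [:: 1;0;1;1;1;2;2;3;4;5].
Proof. by []. Qed.

(* Main.v *)
Require Import Defs.
From mathcomp Require Import all_boot.
From mathcomp Require Import zify.

Definition T m := \sum_(0 <= i < m + 1) padovan (m + 2 - i) * cow i ^ 2.

Lemma cowS m : cow (m + 3) = cow (m + 2) + cow m.
Proof. by rewrite !addnS addn0. Qed.

Lemma padS m : padovan (m + 3) = padovan (m + 1) + padovan m.
Proof. by rewrite !addnS addn0. Qed.

Lemma sumr a b (F : nat -> nat) : a = b + 1 ->
  \sum_(0 <= i < a) F i = \sum_(0 <= i < b) F i + F b.
Proof. by move=> ->; rewrite addn1 big_nat_recr. Qed.

Lemma T_rec m : T (m + 3) = T (m + 1) + T m + cow (m + 2) ^ 2 + cow (m + 3) ^ 2.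
Proof.
rewrite /T (sumr (m + 3 + 1) (m + 3)) //.
rewrite (_ : m + 3 + 2 - (m + 3) = 2); last by lia.
rewrite (@eq_big_nat _ _ _ 0 (m+3) _
   (fun i => padovan ((m+1) + 2 - i) * cow i ^ 2 + padovan (m + 2 - i) * cow i ^ 2)); last first.
  move=> i /andP [_ Hi].
  rewrite (_ : m + 3 + 2 - i = (m + 2 - i) + 3); last by lia.
  rewrite padS mulnDl.
  by rewrite (_ : m + 2 - i + 1 = m + 1 + 2 - i); last by lia.
rewrite big_split /=.
rewrite (sumr (m + 3) (m + 2)); last by lia.
rewrite (sumr (m + 1 + 1) (m + 1)) //.
rewrite (_ : m + 1 + 2 - (m + 2) = 1); last by lia.
rewrite (_ : m + 1 + 2 - (m + 1) = 2); last by lia.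
rewrite (sumr (m + 3) (m + 2)); last by lia.
rewrite (sumr (m + 2) (m + 1)); last by lia.
rewrite (_ : m + 2 - (m + 2) = 0); last by lia.
rewrite (sumr (m + 2) (m + 1)); last by lia.
rewrite (_ : m + 2 - (m + 1) = 1); last by lia.
rewrite (_ : m + 1 + 2 - (m + 1) = 2); last by lia.
rewrite /= !mul0n !addn0 !mul1n.
lia.
Qed.

Lemma key m : cow (m + 2) * cow m = T m.
Proof.
elim/ltn_ind: m => m IH.
case: m IH => [|[|[|m]]] IH.
- by rewrite /T (sumr 1 0) // big_geq.
- by rewrite /T (sumr 2 1) // (sumr 1 0) // big_geq.
- by rewrite /T (sumr 3 2) // (sumr 2 1) // (sumr 1 0) // big_geq.
have -> : m.+3 = m + 3 by lia.
rewrite T_rec -!IH; try lia.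
rewrite (_ : m + 3 + 2 = (m + 2) + 3); last by lia.
rewrite cowS (_ : m + 2 + 2 = m + 1 + 3); last by lia.
rewrite cowS cowS (_ : m + 1 + 2 = m + 3); last by lia.
rewrite cowS.
nia.
Qed.

Theorem mainTheorem15 (n j : nat) (hj : j <= 2) :
  cow (3 * n + j) ^ 2 =
    delta j 0 + (1 - delta j 0) * cow (j - 1) ^ 2 +
    \sum_(1 <= k < n.+1)
       (cow (3 * k + j - 1) ^ 2 +
        2 * \sum_(0 <= i < (3 * (k - 1) + j).+1)
              padovan (3 * k + j - 1 - i) * cow i ^ 2).
Proof.
elim: n => [|n IH].
  rewrite muln0 add0n big_geq //.
  by case: j hj => [|[|[|j]]].
rewrite big_nat_recr // addnA -IH.
set M := 3 * n + j.
rewrite (_ : 3 * n.+1 + j = M + 3); last by rewrite /M; lia.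
rewrite (_ : M + 3 - 1 = M + 2); last by lia.
rewrite (_ : (3 * (n.+1 - 1) + j).+1 = M + 1); last by rewrite /M; lia.
rewrite (@eq_big_nat _ _ _ 0 (M + 1) _ (fun i => padovan (M + 2 - i) * cow i ^ 2)); last first.
  by move=> i _.
rewrite -/(T M) -key cowS.
nia.
Qed.
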